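(* For every integer $n\ge 7$ there exists a CDCC graph $\Gamma_n$ with $n$ vertices such that $I(\Gamma_n)^s$ has linear quotients for all $s\ge 2$.
   Context: A finite simple graph $\Gamma$ is a CDCC graph if it is gapfree (for any two disjoint edges $e,e'$ there is an edge meeting both) and contains each of the following as an induced subgraph: a cricket (a vertex adjacent to four other vertices, with exactly one additional edge, joining two of those four), a diamond (the complete graph on four vertices with one edge removed), the $4$-cycle $C_4$, and the $5$-cycle $C_5$. $I(\Gamma)$ is the edge ideal of $\Gamma$ in a polynomial ring over a field with one variable per vertex, generated by the products of the variables of the endpoints of each edge. A monomial ideal generated in a single degree has linear quotients if its minimal monomial generators can be ordered $u_1>\cdots>u_r$ so that each colon ideal $(u_1,\ldots,u_i):u_{i+1}$, $1\le i<r$, is generated by a subset of the variables. *)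

(* Defs.v *)
From mathcomp Require Import all_boot.
Set Implicit Arguments. Unset Strict Implicit. Unset Printing Implicit Defensive.

Definition simple_graph (n : nat) (G : rel 'I_n) : Prop :=
  symmetric G /\ irreflexive G.

Definition has_induced (n k : nat) (G : rel 'I_n) (H : rel 'I_k) : Prop :=
  exists f : 'I_k -> 'I_n, injective f /\ forall a b, G (f a) (f b) = H a b.

Definition cricket : rel 'I_5 := fun a b =>
  let x := nat_of_ord a in let y := nat_of_ord b in
  [|| (x == 0) && (y != 0), (y == 0) && (x != 0),
      (x == 1) && (y == 2) | (x == 2) && (y == 1)].
Definition diamond : rel 'I_4 := fun a b =>
  (a != b) && ~~ ((nat_of_ord a == 2) && (nat_of_ord b == 3) ||
                  (nat_of_ord a == 3) && (nat_of_ord b == 2)).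
Definition cycle_graph (k : nat) : rel 'I_k := fun a b =>
  (a != b) && ((b == (a.+1 %% k) :> nat) || (a == (b.+1 %% k) :> nat)).

Definition gapfree (n : nat) (G : rel 'I_n) : Prop :=
  forall a b c d : 'I_n, G a b -> G c d ->
    [&& a != c, a != d, b != c & b != d] ->
    G a c \/ G a d \/ G b c \/ G b d.

Definition CDCC (n : nat) (G : rel 'I_n) : Prop :=
  gapfree G /\ has_induced G cricket /\ has_induced G diamond /\
  has_induced G (@cycle_graph 4) /\ has_induced G (@cycle_graph 5).

Definition mon (n : nat) := {ffun 'I_n -> nat}.
Definition mdvd (n : nat) (a b : mon n) : Prop := forall i, a i <= b i.
Definition mmul (n : nat) (a b : mon n) : mon n := [ffun i => a i + b i].

(* A monomial ideal is represented by the set of monomials it contains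
   (a monomial ideal is determined by its monomials). *)
Definition monideal (n : nat) := mon n -> Prop.

Definition gen_ideal (n : nat) (L : seq (mon n)) : monideal n :=
  fun m => exists2 g, g \in L & mdvd g m.

Definition colon (n : nat) (J : monideal n) (u : mon n) : monideal n :=
  fun m => J (mmul m u).

Definition gen_by_variables (n : nat) (J : monideal n) : Prop :=
  exists S : {set 'I_n}, forall m, J m <-> exists2 k, k \in S & 0 < m k.

Definition min_gen (n : nat) (J : monideal n) (m : mon n) : Prop :=
  J m /\ forall m', J m' -> mdvd m' m -> m' = m.

Definition linear_quotients (n : nat) (J : monideal n) : Prop :=
  exists u : seq (mon n),
    [/\ uniq u, (forall m, m \in u <-> min_gen J m) &
        forall i, 0 < i -> i < size u ->
          gen_by_variables (colon (gen_ideal (take i u)) (nth [ffun=> 0] u i))].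

Definition edges_mon (n : nat) (es : seq ('I_n * 'I_n)) : mon n :=
  [ffun k => \sum_(e <- es) ((e.1 == k) + (e.2 == k))].

Definition edge_ideal_pow (n : nat) (G : rel 'I_n) (s : nat) : monideal n :=
  fun m => exists es : seq ('I_n * 'I_n),
    [/\ size es = s, all (fun e => G e.1 e.2) es & mdvd (edges_mon es) m].

(* Main.v *)
Require Import Defs.
From mathcomp Require Import all_boot all_order zify.
Import Order.TTheory.
Set Implicit Arguments. Unset Strict Implicit. Unset Printing Implicit Defensive.

Definition cl (i : nat) : nat :=
  match i with 0 => 0 | 1 => 1 | 2 => 3 | 3 => 4 | 4 => 5 | _ => 2 end.
Definition rimE (x y : nat) : bool :=
  [|| (x == 1) && (y == 2), (x == 2) && (y == 3), (x == 3) && (y == 4),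
      (x == 4) && (y == 5) | (x == 5) && (y == 1)].
Definition W (x y : nat) : bool :=
  [|| (x == 0) && (y != 0), (y == 0) && (x != 0), rimE x y | rimE y x].
Definition Gam (n : nat) : rel 'I_n := fun a b => W (cl a) (cl b).

Lemma cl_lt6 i : cl i < 6.
Proof. by case: i => [|[|[|[|[|i]]]]]. Qed.

Lemma W_sym x y : W x y = W y x.
Proof. rewrite /W; lia. Qed.

Lemma W_irr x : W x x = false.
Proof. rewrite /W /rimE; lia. Qed.

Lemma Gam_simple n : simple_graph (@Gam n).
Proof. split; first by move=> a b; rewrite /Gam W_sym. by move=> a; rewrite /Gam W_irr. Qed.

Definition gapWb : bool := all (fun x => all (fun y => all (fun z => all (fun w =>
  W x y ==> W z w ==> ((x == z) ==> (x == 2)) ==> ((x == w) ==> (x == 2))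
   ==> ((y == z) ==> (y == 2)) ==> ((y == w) ==> (y == 2)) ==>
   [|| W x z, W x w, W y z | W y w]) (iota 0 6)) (iota 0 6)) (iota 0 6)) (iota 0 6).
Lemma gapWb_true : gapWb. Proof. by vm_compute. Qed.

Lemma cl_inj a c : cl a = cl c -> cl a != 2 -> a = c.
Proof.
by case: a => [|[|[|[|[|a]]]]]; case: c => [|[|[|[|[|c]]]]].
Qed.

Lemma Gam_gapfree n : gapfree (@Gam n).
Proof.
move=> a b c d Hab Hcd /and4P [Hac Had Hbc Hbd].
have key : forall u v : 'I_n, u != v -> (cl u == cl v) ==> (cl u == 2).
  move=> u v Huv; apply/implyP => /eqP E; apply/negPn/negP => /(cl_inj E) E2.
  by move: Huv; rewrite (val_inj E2) eqxx.
have Hi : forall x, x < 6 -> x \in iota 0 6 by move=> x Hx; rewrite mem_iota.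
move/allP: gapWb_true => /(_ _ (Hi _ (cl_lt6 a))) /allP /(_ _ (Hi _ (cl_lt6 b)))
  /allP /(_ _ (Hi _ (cl_lt6 c))) /allP /(_ _ (Hi _ (cl_lt6 d))).
move: Hab Hcd; rewrite /Gam => -> -> /=.
rewrite (key _ _ Hac) (key _ _ Had) (key _ _ Hbc) (key _ _ Hbd) /=.
by case/or4P => ->; auto.
Qed.

Lemma mod7lt m x : x %% 7 < 7 + m.
Proof. by apply: leq_trans (ltn_pmod _ _) (leq_addr _ _). Qed.

Definition emb m (l : seq nat) (k : nat) (a : 'I_k) : 'I_(7 + m) :=
  Ordinal (mod7lt m (nth 0 l a)).

Lemma Gam_CDCC m : CDCC (@Gam (7 + m)).
Proof.
split; first exact: Gam_gapfree.
split.
  exists (@emb m [:: 0; 3; 4; 5; 6] 5); split.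
    move=> a b /(congr1 val) /=.
    by case: a => [[|[|[|[|[|?]]]]] ?]; case: b => [[|[|[|[|[|?]]]]] ?] //= _; apply: val_inj.
  by move=> a b; case: a => [[|[|[|[|[|?]]]]] ?]; case: b => [[|[|[|[|[|?]]]]] ?].
split.
  exists (@emb m [:: 0; 1; 5; 4] 4); split.
    move=> a b /(congr1 val) /=.
    by case: a => [[|[|[|[|?]]]] ?]; case: b => [[|[|[|[|?]]]] ?] //= _; apply: val_inj.
  by move=> a b; case: a => [[|[|[|[|?]]]] ?]; case: b => [[|[|[|[|?]]]] ?].
split.
  exists (@emb m [:: 5; 1; 6; 2] 4); split.
    move=> a b /(congr1 val) /=.
    by case: a => [[|[|[|[|?]]]] ?]; case: b => [[|[|[|[|?]]]] ?] //= _; apply: val_inj.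
  by move=> a b; case: a => [[|[|[|[|?]]]] ?]; case: b => [[|[|[|[|?]]]] ?].
exists (@emb m [:: 1; 5; 2; 3; 4] 5); split.
  move=> a b /(congr1 val) /=.
  by case: a => [[|[|[|[|[|?]]]]] ?]; case: b => [[|[|[|[|[|?]]]]] ?] //= _; apply: val_inj.
by move=> a b; case: a => [[|[|[|[|[|?]]]]] ?]; case: b => [[|[|[|[|[|?]]]]] ?].
Qed.

Definition pc n (v : 'I_n -> nat) (c : nat) : nat := \sum_(i < n | cl i == c) v i.

Definition P6 (s : nat) (p : nat -> nat) : bool :=
  [&& p 0 + p 1 + p 2 + p 3 + p 4 + p 5 == 2 * s, p 0 <= s, p 1 + p 3 <= s,
      p 2 + p 4 <= s, p 3 + p 5 <= s, p 4 + p 1 <= s & p 5 + p 2 <= s].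

Lemma pcD n (f g : 'I_n -> nat) c : pc (fun i => f i + g i) c = pc f c + pc g c.
Proof. by rewrite /pc big_split. Qed.

Lemma pc_ext n (f g : 'I_n -> nat) c : f =1 g -> pc f c = pc g c.
Proof. by move=> E; rewrite /pc; apply: eq_bigr => i _. Qed.

Lemma pc_ind n (a : 'I_n) c : pc (fun i => nat_of_bool (a == i)) c = (cl a == c).
Proof.
case E: (cl a == c).
  rewrite /pc (bigD1 a) //= eqxx big1 ?addn0 // => i /andP [_ Hi].
  by rewrite eq_sym (negbTE Hi).
rewrite /pc big1 // => i /eqP Hi; case: eqP => // Ha.
by move: E; rewrite Ha Hi eqxx.
Qed.

Lemma pc0 n c : pc (fun _ : 'I_n => 0) c = 0.
Proof. by rewrite /pc big1. Qed.

Lemma pc_total n (v : 'I_n -> nat) :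
  \sum_(i < n) v i = pc v 0 + pc v 1 + pc v 2 + pc v 3 + pc v 4 + pc v 5.
Proof.
rewrite (partition_big (fun i : 'I_n => Ordinal (cl_lt6 i)) xpredT) //=.
rewrite !big_ord_recr big_ord0 /= add0n /pc.
by congr (_ + _ + _ + _ + _ + _); apply: eq_bigl => i.
Qed.


Lemma pc_gt n (v w : 'I_n -> nat) c : pc w c < pc v c -> exists i : 'I_n, cl i = c /\ w i < v i.
Proof.
move=> H.
case: (boolP [exists i : 'I_n, (cl i == c) && (w i < v i)]).
  by case/existsP => i /andP [/eqP ? ?]; exists i.
rewrite negb_exists => /forallP Hn.
have : pc v c <= pc w c.
  rewrite /pc; apply: leq_sum => i /eqP Hi.
  by move: (Hn i); rewrite Hi eqxx /= -leqNgt.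
by rewrite leqNgt H.
Qed.

Lemma pc_pos n (v : 'I_n -> nat) c : 0 < pc v c -> exists i : 'I_n, cl i = c /\ 0 < v i.
Proof.
move=> H; have H' : pc (fun _ : 'I_n => 0) c < pc v c by rewrite pc0.
by case: (pc_gt H') => i [? ?]; exists i.
Qed.

Lemma edges_mon_cons n (e : 'I_n * 'I_n) es k :
  edges_mon (e :: es) k = (e.1 == k) + (e.2 == k) + edges_mon es k.
Proof. by rewrite !ffunE big_cons. Qed.

Lemma edges_mon_nil n k : edges_mon (n:=n) [::] k = 0.
Proof. by rewrite ffunE big_nil. Qed.

Lemma P6_step s p x y : x < 6 -> y < 6 -> W x y -> P6 s p ->
  P6 s.+1 (fun c => (x == c) + (y == c) + p c).
Proof.
move: x y => [|[|[|[|[|[|x]]]]]] [|[|[|[|[|[|y]]]]]] //= _ _ _; rewrite /P6 /=; lia.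
Qed.

Lemma P6_edges n (es : seq ('I_n * 'I_n)) :
  all (fun e => Gam e.1 e.2) es -> P6 (size es) (pc (edges_mon es)).
Proof.
elim: es => [|e es IH] /=.
  move=> _; rewrite /P6.
  have E : forall c, pc (edges_mon (n:=n) [::]) c = 0.
    by move=> c; rewrite (pc_ext _ (@edges_mon_nil n)) pc0.
  rewrite !E; lia.
case/andP => He Hes.
have E : forall c, pc (edges_mon (e :: es)) c =
   (cl e.1 == c) + (cl e.2 == c) + pc (edges_mon es) c.
  move=> c; rewrite (pc_ext _ (edges_mon_cons e es)) !pcD !pc_ind.
  done.
have := P6_step (cl_lt6 e.1) (cl_lt6 e.2) He (IH Hes).
by rewrite /P6 !E.
Qed.

Definition sub2 (p : nat -> nat) x y := fun c => p c - (x == c) - (y == c).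

Ltac wit x y := exists x, y; rewrite /P6 /sub2 /= ?subn0; lia.

Lemma peel6 s p : P6 s.+1 p -> exists x y,
  [&& x < 6, y < 6, W x y, 0 < p x, 0 < p y & P6 s (sub2 p x y)].
Proof.
rewrite /P6 => H.
case: (posnP (p 0)) => H0.
  case: (ltnP (p 3 + p 5) s.+1) => h1; first by wit 1 2.
  case: (ltnP (p 4 + p 1) s.+1) => h2; first by wit 2 3.
  case: (ltnP (p 5 + p 2) s.+1) => h3; first by wit 3 4.
  case: (ltnP (p 1 + p 3) s.+1) => h4; first by wit 4 5.
  case: (ltnP (p 2 + p 4) s.+1) => h5; first by wit 5 1.
  exfalso; lia.
case: (ltnP (p 1 + p 3) s.+1) => t13.
  case: (ltnP (p 4 + p 1) s.+1) => t41.
    case: (ltnP (p 2 + p 4) s.+1) => t24.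
      case: (ltnP (p 3 + p 5) s.+1) => t35.
        case: (ltnP (p 5 + p 2) s.+1) => t52.
          case: (posnP (p 1)) => q1; last by wit 0 1.
          case: (posnP (p 2)) => q2; last by wit 0 2.
          case: (posnP (p 3)) => q3; last by wit 0 3.
          case: (posnP (p 4)) => q4; last by wit 0 4.
          case: (posnP (p 5)) => q5; last by wit 0 5.
          exfalso; lia.
        case: (posnP (p 5)) => q5; [by wit 0 2 | by wit 0 5].
      case: (ltnP (p 5 + p 2) s.+1) => t52; last by wit 0 5.
      case: (posnP (p 3)) => q3; [by wit 0 5 | by wit 0 3].
    case: (ltnP (p 5 + p 2) s.+1) => t52; last by wit 0 2.
    case: (posnP (p 2)) => q2; [by wit 0 4 | by wit 0 2].
  case: (ltnP (p 2 + p 4) s.+1) => t24; last by wit 0 4.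
  case: (posnP (p 4)) => q4; [by wit 0 1 | by wit 0 4].
case: (ltnP (p 4 + p 1) s.+1) => t41; last by wit 0 1.
case: (ltnP (p 3 + p 5) s.+1) => t35; last by wit 0 3.
case: (posnP (p 1)) => q1; [by wit 0 3 | by wit 0 1].
Qed.

Lemma P6_ext s p q : (forall c, p c = q c) -> P6 s p = P6 s q.
Proof. by move=> E; rewrite /P6 !E. Qed.

Lemma P6_total n s (v : 'I_n -> nat) : P6 s (pc v) -> \sum_(i < n) v i = 2 * s.
Proof. rewrite pc_total /P6; lia. Qed.

Lemma sum_le n (v : 'I_n -> nat) i : v i <= \sum_(j < n) v j.
Proof. by rewrite (bigD1 i) //= leq_addr. Qed.

Lemma decomp n s (v : mon n) : P6 s (pc v) -> exists es : seq ('I_n * 'I_n),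
  [/\ size es = s, all (fun e => Gam e.1 e.2) es & edges_mon es = v].
Proof.
elim: s v => [|s IH] v H.
  exists [::]; split => //; apply/ffunP => i; rewrite edges_mon_nil.
  by apply/eqP; rewrite eq_sym -leqn0; apply: leq_trans (sum_le v i) _; rewrite (P6_total H).
have [x [y /and4P [Hx Hy HW /and3P [Hpx Hpy HP]]]] := peel6 H.
have [a [Ha Hva]] := pc_pos Hpx.
have [b [Hb Hvb]] := pc_pos Hpy.
have Hab : a != b.
  apply/eqP => E; move: HW; rewrite -Ha -Hb E W_irr.
  done.
pose v' : mon n := [ffun i => v i - (a == i) - (b == i)].
have Ev : forall i, v i = v' i + (a == i) + (b == i).
  move=> i; rewrite ffunE.
  case E1: (a == i); case E2: (b == i) => /=.
  - by move: Hab; rewrite (eqP E1) (eqP E2) eqxx.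
  - move/eqP: E1 => <-; lia.
  - move/eqP: E2 => <-; lia.
  - lia.
have Epc : forall c, pc v' c = sub2 (pc v) x y c.
  move=> c; rewrite /sub2 (pc_ext _ Ev) !pcD !pc_ind Ha Hb; lia.
have [es' [Hs Hall Hm]] := IH v' (etrans (P6_ext _ Epc) HP).
exists ((a, b) :: es'); split => /=; first by rewrite Hs.
  by rewrite Hall andbT /Gam Ha Hb.
apply/ffunP => i; rewrite edges_mon_cons Hm /= (Ev i); lia.
Qed.

Lemma char n s (m : mon n) : edge_ideal_pow (@Gam n) s m <->
  exists v : mon n, P6 s (pc v) /\ mdvd v m.
Proof.
split.
  case=> es [Hs Hall Hd]; exists (edges_mon es); split => //.
  by rewrite -Hs; apply: P6_edges.
case=> v [Hv Hd]; have [es [Hs Hall Hm]] := decomp Hv.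
by exists es; split => //; rewrite Hm.
Qed.

Lemma le_sum_eq n (v w : 'I_n -> nat) : (forall i, v i <= w i) ->
  \sum_(i < n) v i = \sum_(i < n) w i -> forall i, v i = w i.
Proof.
move=> Hle Hs i; apply/eqP; rewrite eqn_leq Hle /=.
move: Hs; rewrite (bigD1 i) //= [X in _ = X](bigD1 i) //= => Hs.
have HA : \sum_(j < n | j != i) v j <= \sum_(j < n | j != i) w j.
  by apply: leq_sum => j _.
by rewrite -(leq_add2r (\sum_(j < n | j != i) v j)) Hs leq_add2l.
Qed.

Lemma min_gen_char n s (m : mon n) : min_gen (edge_ideal_pow (@Gam n) s) m <-> P6 s (pc m).
Proof.
split.
  case=> /char [v [Hv Hd]] Hmin.
  have : v = m by apply: Hmin => //; apply/char; exists v; split => //.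
  by move=> <-.
move=> Hm; split; first by apply/char; exists m; split.
move=> m' /char [v [Hv Hd]] Hd'.
have Hvm : forall i, v i <= m i by move=> i; apply: leq_trans (Hd i) (Hd' i).
have E := le_sum_eq Hvm (etrans (P6_total Hv) (esym (P6_total Hm))).
apply/ffunP => i; apply/eqP; rewrite eqn_leq Hd' /=.
by rewrite -E Hd.
Qed.

Lemma lt6E (a0 a1 a2 a3 a4 a5 b0 b1 b2 b3 b4 b5 : nat) :
  (([:: a0; a1; a2; a3; a4; a5] : seqlexi nat) < [:: b0; b1; b2; b3; b4; b5])%O =
  [|| a0 < b0, (a0 == b0) && (a1 < b1), [&& a0 == b0, a1 == b1 & a2 < b2],
      [&& a0 == b0, a1 == b1, a2 == b2 & a3 < b3],
      [&& a0 == b0, a1 == b1, a2 == b2, a3 == b3 & a4 < b4] |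
      [&& a0 == b0, a1 == b1, a2 == b2, a3 == b3, a4 == b4 & a5 < b5]].
Proof.
rewrite !Order.SeqLexiOrder.ltxi_cons Order.SeqLexiOrder.ltxis0 !Order.NatOrder.leEnat.
lia.
Qed.

Definition rank (k : nat) : nat := if k == 0 then 1 else if k == 1 then 0 else k.

Definition feat (s : nat) (p : nat -> nat) : seqlexi nat :=
  if (p 0 == 0) && (p 1 == 0) then
    [:: p 0; p 1; p 2; (if p 2 == 0 then 3 * s - rank (p 5) else p 3); p 4; p 5]
  else [:: p 0; p 1; p 2; p 5; p 3; p 4].

Lemma featR s p : ~~ ((p 0 == 0) && (p 1 == 0)) ->
  feat s p = [:: p 0; p 1; p 2; p 5; p 3; p 4].
Proof. by rewrite /feat => /negbTE ->. Qed.

Lemma featS1 s p : p 0 = 0 -> p 1 = 0 -> 0 < p 2 ->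
  feat s p = [:: p 0; p 1; p 2; p 3; p 4; p 5].
Proof. by rewrite /feat => -> -> /lt0n_neq0 /negbTE ->. Qed.

Lemma featS0 s p : p 0 = 0 -> p 1 = 0 -> p 2 = 0 ->
  feat s p = [:: p 0; p 1; p 2; 3 * s - rank (p 5); p 4; p 5].
Proof. by rewrite /feat => -> -> ->. Qed.

Definition mv6 (p : nat -> nat) x y := fun c => p c + (x == c) - (y == c).

Lemma feat_head s p : exists a b c, feat s p = [:: p 0; p 1; p 2; a; b; c].
Proof. by rewrite /feat; case: ifP; eexists; eexists; eexists. Qed.

Lemma rank0 : rank 0 = 1. Proof. by []. Qed.
Lemma rank1 : rank 1 = 0. Proof. by []. Qed.
Lemma rank_ge2 k : 2 <= k -> rank k = k.
Proof. by rewrite /rank; case: k => [|[|k]]. Qed.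
Lemma rank_le k : 0 < k -> rank k <= k.
Proof. by rewrite /rank; case: k => [|[|k]]. Qed.

Ltac wR x y := exists x, y; rewrite (@featR _ (mv6 _ x y)) /mv6 /P6 /= ?subn0 ?addn0;
  [rewrite ?lt6E; lia | lia].
Ltac wS1 x y := exists x, y; rewrite (@featS1 _ (mv6 _ x y)) /mv6 /P6 /= ?subn0 ?addn0;
  [rewrite ?lt6E; lia | lia | lia | lia].

Ltac wRE Ef x y := exists x, y; rewrite Ef (@featR _ (mv6 _ x y)) /mv6 /P6 /= ?subn0 ?addn0;
  [rewrite ?lt6E; lia | lia].
Ltac wS1E Ef x y := exists x, y; rewrite Ef (@featS1 _ (mv6 _ x y)) /mv6 /P6 /= ?subn0 ?addn0;
  [rewrite ?lt6E; lia | lia | lia | lia].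

Lemma core6 s p q : 2 <= s -> P6 s p -> P6 s q -> (feat s p < feat s q)%O ->
  exists x y, [&& x < 6, y < 6, p x < q x, 0 < p y, P6 s (mv6 p x y) &
                  (feat s p < feat s (mv6 p x y))%O].
Proof.
move=> Hs Hp Hq Hlt; move: (Hp) (Hq); rewrite /P6 => hp hq.
case: (boolP ((p 0 == 0) && (p 1 == 0))) => sp; last first.
  rewrite (featR s sp) in Hlt *.
  case: (boolP ((q 0 == 0) && (q 1 == 0))) => sq.
    by exfalso; move: Hlt; rewrite /feat sq lt6E; lia.
  rewrite (featR s sq) lt6E in Hlt.
  case: (ltnP (p 0) (q 0)) => h0.
    case: (posnP (p 1)) => y1; last by wR 0 1.
    case: (posnP (p 2)) => y2; last by wR 0 2.
    case: (posnP (p 3)) => y3; last by wR 0 3.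
    case: (posnP (p 4)) => y4; last by wR 0 4.
    case: (posnP (p 5)) => y5; last by wR 0 5.
    exfalso; lia.
  have e0 : p 0 = q 0 by lia.
  case: (ltnP (p 1) (q 1)) => h1.
    case: (ltnP (p 1 + p 3) s) => t13; case: (ltnP (p 4 + p 1) s) => t41.
    - case: (posnP (p 2)) => y2; last by wR 1 2.
      case: (posnP (p 3)) => y3; last by wR 1 3.
      case: (posnP (p 4)) => y4; last by wR 1 4.
      case: (posnP (p 5)) => y5; last by wR 1 5.
      exfalso; lia.
    - by wR 1 4.
    - by wR 1 3.
    - case: (ltnP (p 2) (q 2)) => h2; first by wR 2 4.
      by wR 5 3.
  have e1 : p 1 = q 1 by lia.
  case: (ltnP (p 2) (q 2)) => h2.
    case: (ltnP (p 2 + p 4) s) => t24; case: (ltnP (p 5 + p 2) s) => t52.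
    - case: (posnP (p 3)) => y3; last by wR 2 3.
      case: (posnP (p 4)) => y4; last by wR 2 4.
      case: (posnP (p 5)) => y5; last by wR 2 5.
      exfalso; lia.
    - by wR 2 5.
    - by wR 2 4.
    - by wR 3 4.
  have e2 : p 2 = q 2 by lia.
  case: (ltnP (p 5) (q 5)) => h5.
    case: (ltnP (p 3 + p 5) s) => t35; last by wR 5 3.
    case: (posnP (p 3)) => y3; last by wR 5 3.
    by wR 5 4.
  have e5 : p 5 = q 5 by lia.
  case: (ltnP (p 3) (q 3)) => h3; first by wR 3 4.
  exfalso; lia.
move/andP: sp => [/eqP z0 /eqP z1].
have [fa [fb [fc Ef]]] := feat_head s p.
case: (boolP ((q 0 == 0) && (q 1 == 0))) => sq; last first.
  case: (posnP (q 0)) => hq0; last first.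
    case: (posnP (p 2)) => y2; last by wRE Ef 0 2.
    case: (posnP (p 3)) => y3; last by wRE Ef 0 3.
    case: (posnP (p 4)) => y4; last by wRE Ef 0 4.
    case: (posnP (p 5)) => y5; last by wRE Ef 0 5.
    exfalso; lia.
  case: (ltnP (p 3) s) => t13; case: (ltnP (p 4) s) => t41.
  - case: (posnP (p 2)) => y2; last by wRE Ef 1 2.
    case: (posnP (p 3)) => y3; last by wRE Ef 1 3.
    case: (posnP (p 4)) => y4; last by wRE Ef 1 4.
    case: (posnP (p 5)) => y5; last by wRE Ef 1 5.
    exfalso; lia.
  - by wRE Ef 1 4.
  - by wRE Ef 1 3.
  have z2 : p 2 = 0 by lia.
  have z5 : p 5 = 0 by lia.
  case: (posnP (q 2)) => hq2; last by wS1E Ef 2 4.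
  exists 5, 3; rewrite (featS0 s z0 z1 z2) (@featS0 _ (mv6 _ 5 3)) /mv6 /P6 /= ?subn0 ?addn0;
    rewrite ?z5 ?rank0 ?rank1 ?lt6E; lia.
move/andP: sq => [/eqP w0 /eqP w1].
case: (ltngtP (p 2) (q 2)) => h2.
- case: (ltnP (p 2 + p 4) s) => t24; case: (ltnP (p 5 + p 2) s) => t52.
  + case: (posnP (p 3)) => y3; last by wS1E Ef 2 3.
    case: (posnP (p 4)) => y4; last by wS1E Ef 2 4.
    case: (posnP (p 5)) => y5; last by wS1E Ef 2 5.
    exfalso; lia.
  + by wS1E Ef 2 5.
  + by wS1E Ef 2 4.
  case: (posnP (p 2)) => z2.
    have z3 : p 3 = 0 by lia.
    have r1 : rank (p 5) = p 5 by apply: rank_ge2; lia.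
    have r2 : rank (p 5 - 1) <= p 5 - 1 by apply: rank_le; lia.
    exists 3, 5; rewrite (featS0 s z0 z1 z2) (@featS0 _ (mv6 _ 3 5)) /mv6 /P6 /= ?subn0 ?addn0;
      rewrite ?r1 ?lt6E; lia.
  by exists 3, 5; rewrite (featS1 s z0 z1 z2) (@featS1 _ (mv6 _ 3 5)) /mv6 /P6 /= ?subn0 ?addn0;
    [rewrite ?lt6E; lia | lia | lia | lia].
- by exfalso; move: Hlt; rewrite Ef; have [ga [gb [gc ->]]] := feat_head s q; rewrite lt6E; lia.
case: (posnP (p 2)) => z2.
  have z2' : q 2 = 0 by lia.
  rewrite (featS0 s z0 z1 z2) (featS0 s w0 w1 z2') lt6E in Hlt.
  rewrite (featS0 s z0 z1 z2).
  case: (posnP (p 5)) => z5.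
    have hq5 : q 5 = 1.
      move: Hlt; rewrite z5 rank0; case E: (q 5) => [|[|k]]; rewrite ?rank0 ?rank1 ?rank_ge2 //; lia.
    by exists 5, 3; rewrite (@featS0 _ (mv6 _ 5 3)) /mv6 /P6 /= ?subn0 ?addn0;
      rewrite ?z5 ?rank0 ?rank1 ?lt6E; lia.
  case: (eqVneq (p 5) 1) => o5.
    by exfalso; move: Hlt; rewrite o5 rank1; case E: (q 5) => [|[|k]]; rewrite ?rank0 ?rank1 ?rank_ge2 //; lia.
  have r1 : rank (p 5) = p 5 by apply: rank_ge2; lia.
  have r2 : rank (p 5 - 1) <= p 5 - 1 by apply: rank_le; lia.
  have hq5 : q 5 < p 5.
    move: Hlt; rewrite r1; case E: (q 5) => [|[|k]]; rewrite ?rank0 ?rank1 ?rank_ge2 //; lia.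
  exists 3, 5; rewrite (@featS0 _ (mv6 _ 3 5)) /mv6 /P6 /= ?subn0 ?addn0; rewrite ?r1 ?lt6E; lia.
have z2' : 0 < q 2 by lia.
rewrite (featS1 s z0 z1 z2) (featS1 s w0 w1 z2') lt6E in Hlt.
rewrite (featS1 s z0 z1 z2).
case: (ltnP (p 3) (q 3)) => h3.
  case: (ltnP (p 3 + p 5) s) => t35; last by wS1 3 5.
  case: (posnP (p 4)) => y4; last by wS1 3 4.
  by wS1 3 5.
case: (ltnP (p 4) (q 4)) => h4; first by wS1 4 5.
exfalso; lia.
Qed.

Lemma ltxi_nilE : (([::] : seqlexi nat) < [::])%O = false.
Proof. by rewrite Order.SeqLexiOrder.ltxis0. Qed.

Lemma ltxi_consE (x y : nat) (s1 s2 : seq nat) :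
  ((x :: s1 : seqlexi nat) < y :: s2)%O = (x < y) || (x == y) && ((s1 : seqlexi nat) < s2)%O.
Proof.
rewrite Order.SeqLexiOrder.ltxi_cons !Order.NatOrder.leEnat.
by case: (ltngtP x y).
Qed.

Lemma ltxi_cat (a1 a2 b1 b2 : seq nat) : size a1 = size a2 ->
  ((a1 ++ b1 : seqlexi nat) < a2 ++ b2)%O =
  ((a1 : seqlexi nat) < a2)%O || (a1 == a2) && ((b1 : seqlexi nat) < b2)%O.
Proof.
elim: a1 a2 => [|x a1 IH] [|y a2] //= Hs; try discriminate.
rewrite !ltxi_consE IH; last by case: Hs.
by rewrite eqseq_cons; case: (ltngtP x y).
Qed.

Lemma ltxi_nth (s1 s2 : seq nat) : size s1 = size s2 -> ((s1 : seqlexi nat) < s2)%O ->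
  exists j, [/\ j < size s1, (forall i, i < j -> nth 0 s1 i = nth 0 s2 i) &
               nth 0 s1 j < nth 0 s2 j].
Proof.
elim: s1 s2 => [|x s1 IH] [|y s2] //= [Hs].
rewrite ltxi_consE; case/orP => [H|/andP [/eqP <- H]].
  by exists 0.
have [j [Hj Hpre Hlt]] := IH _ Hs H.
exists j.+1; split => //.
by move=> [|i] //= Hi; apply: Hpre.
Qed.

Lemma nth_ltxi (s1 s2 : seq nat) j : size s1 = size s2 -> j < size s1 ->
  (forall i, i < j -> nth 0 s1 i = nth 0 s2 i) -> nth 0 s1 j < nth 0 s2 j ->
  ((s1 : seqlexi nat) < s2)%O.
Proof.
elim: s1 s2 j => [|x s1 IH] [|y s2] //= j Hs; try discriminate; case: Hs => Hs.
case: j => [|j] /= Hj Hpre Hlt.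
  by rewrite ltxi_consE Hlt.
have /= Exy := Hpre 0 erefl.
rewrite ltxi_consE Exy eqxx ltnn /=.
apply: (IH _ j) => // i Hi.
exact: (Hpre i.+1).
Qed.

Definition vec n (v : mon n) : seq nat := [seq v i | i <- enum 'I_n].

Lemma size_vec n (v : mon n) : size (vec v) = n.
Proof. by rewrite size_map size_enum_ord. Qed.

Lemma nth_vec n (v : mon n) (i : 'I_n) : nth 0 (vec v) i = v i.
Proof.
by rewrite (nth_map i) ?size_enum_ord // nth_ord_enum.
Qed.

Lemma vec_inj n : injective (@vec n).
Proof.
move=> u v E; apply/ffunP => i.
by rewrite -!nth_vec E.
Qed.

Lemma size_feat s p : size (feat s p) = 6.
Proof. by rewrite /feat; case: ifP. Qed.

Definition kk n s (v : mon n) : seqlexi nat := (feat s (pc v) : seq nat) ++ vec v.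

Lemma kk_inj n s : injective (@kk n s).
Proof.
move=> u v /eqP; rewrite /kk eqseq_cat ?size_feat // => /andP [_ /eqP].
exact: vec_inj.
Qed.

Lemma feat_ext s p q : (forall c, p c = q c) -> feat s p = feat s q.
Proof. by move=> E; rewrite /feat !E. Qed.

Lemma feat_inj s p q : P6 s p -> P6 s q -> feat s p = feat s q ->
  forall c, c < 6 -> p c = q c.
Proof.
rewrite /P6 => Hp Hq.
rewrite /feat; case: ifP => [A|/negbT A]; case: ifP => [B|/negbT B];
  (try case: ifP => [C|/negbT C]); (try case: ifP => [D|/negbT D]);
  case=> ? ? ? ? ? ? c; case: c => [|[|[|[|[|[|c]]]]]] // _; lia.
Qed.

Definition mvm n (u : mon n) (l b : 'I_n) : mon n := [ffun i => u i + (l == i) - (b == i)].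

Lemma pc_mvm n (u : mon n) l b c : 0 < u b -> l != b ->
  pc (mvm u l b) c = mv6 (pc u) (cl l) (cl b) c.
Proof.
move=> Hb Hlb.
have E : forall i, mvm u l b i + (b == i) = u i + (l == i).
  move=> i; rewrite ffunE.
  case E1: (l == i); case E2: (b == i) => /=.
  - by move: Hlb; rewrite (eqP E1) (eqP E2) eqxx.
  - lia.
  - move/eqP: E2 => <-; lia.
  - lia.
have H1 : pc (fun i => mvm u l b i + (b == i)) c = pc (fun i => u i + (l == i)) c.
  by apply: pc_ext.
rewrite !pcD !pc_ind in H1.
rewrite /mv6; lia.
Qed.

Lemma mv6_same p x c : mv6 p x x c = p c.
Proof. rewrite /mv6; lia. Qed.

Lemma EP n s (u g : mon n) : 2 <= s -> P6 s (pc u) -> P6 s (pc g) -> (kk s u < kk s g)%O ->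
  exists l b : 'I_n, [/\ u l < g l, 0 < u b, P6 s (pc (mvm u l b)) &
                        (kk s u < kk s (mvm u l b))%O].
Proof.
move=> Hs Hu Hg; rewrite /kk ltxi_cat ?size_feat // => /orP [Hf | /andP [/eqP Ef Hv]].
  have [x [y /and5P [Hx Hy Hxl Hyp /andP [HP Hlt]]]] := core6 Hs Hu Hg Hf.
  have [l [Hl Hlt']] := pc_gt Hxl.
  have [b [Hb Hbp]] := pc_pos Hyp.
  have Hxy : x != y.
    apply/eqP => Exy; move: Hlt; rewrite -Exy.
    by rewrite (@feat_ext s (mv6 (pc u) x x) (pc u)) ?ltxx // => c; rewrite mv6_same.
  have Hlb : l != b by apply: contraNneq Hxy => E; rewrite -Hl -Hb E.
  exists l, b; split => //.
    by rewrite (P6_ext _ (fun c => pc_mvm c Hbp Hlb)) Hl Hb.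
  by rewrite /kk ltxi_cat ?size_feat // (feat_ext _ (fun c => pc_mvm c Hbp Hlb)) Hl Hb Hlt.
have Epc : forall c, c < 6 -> pc u c = pc g c := feat_inj Hu Hg Ef.
have [j [Hj Hpre Hlt]] := ltxi_nth (etrans (size_vec u) (esym (size_vec g))) Hv.
rewrite size_vec in Hj.
pose jj := Ordinal Hj.
have Hpre' : forall i : 'I_n, i < jj -> u i = g i.
  by move=> i Hi; rewrite -!nth_vec; apply: Hpre.
have Hlt' : u jj < g jj by rewrite -!nth_vec.
have [k [Hk Hgk]] : exists k : 'I_n, cl k = cl jj /\ g k < u k.
  case: (boolP [exists k : 'I_n, (cl k == cl jj) && (g k < u k)]).
    by case/existsP => k /andP [/eqP ? ?]; exists k.
  rewrite negb_exists => /forallP Hn; exfalso.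
  have Hsum : pc u (cl jj) < pc g (cl jj).
    rewrite /pc (bigD1 jj) //= [X in _ < X](bigD1 jj) //=.
    rewrite -addSn leq_add //; apply: leq_sum => i /andP [/eqP Hi _].
    by move: (Hn i); rewrite Hi eqxx /= -leqNgt.
  by move: Hsum; rewrite Epc ?cl_lt6 // ltnn.
have Ejj : nat_of_ord jj = j by [].
have Hkj : jj < k.
  rewrite ltnNge leq_eqVlt; apply/negP => /orP [/eqP Ek | Hkj].
    by have := val_inj Ek; move=> E; move: Hgk; rewrite E; lia.
  by have := Hpre' k Hkj; lia.
have Hkp : 0 < u k by lia.
have Hjk : jj != k by rewrite neq_ltn Hkj.
exists jj, k; split => //.
  by rewrite (P6_ext _ (fun c => pc_mvm c Hkp Hjk)) Hk (P6_ext _ (mv6_same _ _)).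
rewrite /kk ltxi_cat ?size_feat //.
rewrite (feat_ext _ (fun c => pc_mvm c Hkp Hjk)) Hk (feat_ext _ (mv6_same _ _)) ltxx eqxx /=.
apply: (nth_ltxi (j := j)); rewrite ?size_vec //.
  move=> i Hi; have Hin : i < n by lia.
  rewrite -[i]/(nat_of_ord (Ordinal Hin)) !nth_vec ffunE.
  have -> : (jj == Ordinal Hin) = false by apply/negbTE; rewrite neq_ltn /= Hi orbT.
  have -> : (k == Ordinal Hin) = false by apply/negbTE; rewrite neq_ltn /=; apply/orP; right; lia.
  by rewrite addn0 subn0.
rewrite -[j]/(nat_of_ord jj) !nth_vec ffunE eqxx.
have -> : (k == jj) = false by apply/negbTE; rewrite eq_sym.
lia.
Qed.

Definition toMon n s (f : {ffun 'I_n -> 'I_(2 * s).+1}) : mon n := [ffun i => nat_of_ord (f i)].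

Definition gens n s : seq (mon n) :=
  [seq v : mon n <- [seq toMon f | f <- enum {ffun 'I_n -> 'I_(2 * s).+1}] | P6 s (pc v)].

Definition leK n s : rel (mon n) := fun x y => (kk s y <= kk s x)%O.

Definition Lst n s : seq (mon n) := sort (@leK n s) (gens n s).

Lemma leK_total n s : total (@leK n s).
Proof. by move=> x y; rewrite /leK le_total. Qed.

Lemma leK_trans n s : transitive (@leK n s).
Proof. by move=> y x z; rewrite /leK => H1 H2; apply: le_trans H2 H1. Qed.

Lemma mem_Lst n s (v : mon n) : (v \in Lst n s) = P6 s (pc v).
Proof.
rewrite mem_sort mem_filter.
case H: (P6 s (pc v)) => //=.
have Hb : forall i, v i < (2 * s).+1.
  by move=> i; rewrite ltnS -(P6_total H) sum_le.
have -> : v = toMon [ffun i => Ordinal (Hb i)] by apply/ffunP => i; rewrite !ffunE.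
by apply: map_f; rewrite mem_enum.
Qed.

Lemma uniq_Lst n s : uniq (Lst n s).
Proof.
rewrite sort_uniq filter_uniq // map_inj_uniq ?enum_uniq //.
move=> f1 f2 E; apply/ffunP => i; apply: val_inj.
by have := congr1 (fun v : mon n => v i) E; rewrite !ffunE.
Qed.

Lemma sorted_Lst n s : sorted (@leK n s) (Lst n s).
Proof. rewrite /Lst; exact: (sort_sorted (@leK_total n s)). Qed.

Lemma LQ n s : 2 <= s -> linear_quotients (edge_ideal_pow (@Gam n) s).
Proof.
move=> Hs; set L := Lst n s.
have HU : uniq L := uniq_Lst n s.
have HS : sorted (@leK n s) L := sorted_Lst n s.
have Hnth := sorted_ltn_nth (@leK_trans n s) [ffun=> 0] HS.
exists L; split => //.
  by move=> m; rewrite mem_Lst min_gen_char.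
move=> i Hi0 HiL.
set u := nth [ffun=> 0] L i.
have Hu : P6 s (pc u) by rewrite -mem_Lst mem_nth.
have Hbefore : forall w, w \in L -> (kk s u < kk s w)%O -> w \in take i L.
  move=> w /(nthP [ffun=> 0]) [j Hj <-] Hlt.
  have Hji : j < i.
    rewrite ltnNge; apply/negP; rewrite leq_eqVlt => /orP [/eqP Eij | Hij].
      by move: Hlt; rewrite /u Eij ltxx.
    have := Hnth i j HiL Hj Hij; rewrite /leK => Hle.
    by move: Hlt; rewrite /u ltNge Hle.
  rewrite -(nth_take _ Hji); apply: mem_nth; rewrite size_take HiL //.
have Hafter : forall g, g \in take i L -> (kk s u < kk s g)%O.
  move=> g /(nthP [ffun=> 0]) [j]; rewrite size_take HiL => Hj.
  rewrite nth_take // => <-.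
  have HjL : j < size L by apply: ltn_trans HiL.
  have := Hnth j i HjL HiL Hj; rewrite /leK => Hle.
  rewrite lt_neqAle Hle andbT; apply/negP => /eqP /kk_inj E.
  move: E; move/eqP; rewrite /u nth_uniq // => /eqP Eij.
  by move: Hj; rewrite Eij ltnn.
exists [set l : 'I_n | [exists b : 'I_n, mvm u l b \in take i L]] => m; split.
  case=> g Hg Hd.
  have HgL : g \in L by apply: mem_take Hg.
  have Hgp : P6 s (pc g) by rewrite -mem_Lst.
  have [l [b [Hl Hb HP Hk]]] := EP Hs Hu Hgp (Hafter g Hg).
  exists l.
    rewrite inE; apply/existsP; exists b; apply: Hbefore => //.
    by rewrite mem_Lst.
  by have := Hd l; rewrite ffunE; lia.
case=> k; rewrite inE => /existsP [b Hb] Hm.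
exists (mvm u k b) => // j; rewrite !ffunE.
case: (eqVneq k j) => [<-|Hkj] /=; lia.
Qed.

Theorem theorem5p7 : forall n : nat, 7 <= n ->
  exists G : rel 'I_n,
    simple_graph G /\ CDCC G /\
    forall s : nat, 2 <= s -> linear_quotients (edge_ideal_pow G s).
Proof.
move=> n Hn; have [m ->] : exists m, n = 7 + m by exists (n - 7); lia.
exists (@Gam (7 + m)); split; first exact: Gam_simple.
split; first exact: Gam_CDCC.
by move=> s Hs; apply: LQ.
Qed.
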